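(* Let $t$ and $m$ be positive integers. Then there exist a constant $c>0$ and $X_0$ (depending on $m,t$) such that for all $X\ge X_0$, \[ \#\left\{ n\leq X : p_{mt,t}(n)\equiv 0\pmod{2} \right\} \geq c\sqrt{X/3}, \] i.e. $\#\{ n\leq X : p_{mt,t}(n)\equiv 0\pmod{2}\} \gg \sqrt{X/3}$ for large $X$.
   Context: A partition $\lambda$ of a non-negative integer $n$ is a non-increasing sequence of positive integers (its parts) summing to $n$. For positive integers $A$ and $a$, $\mathrm{mex}_{A,a}(\lambda)$ denotes the smallest positive integer congruent to $a$ modulo $A$ that is not a part of $\lambda$. Then $p_{A,a}(n)$ denotes the number of partitions $\lambda$ of $n$ satisfying $\mathrm{mex}_{A,a}(\lambda)\equiv a \pmod{2A}$. Here $n$ ranges over positive integers. *)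

(* Defs.v *)
From mathcomp Require Import all_boot.
From Stdlib Require Import Reals ZArith.

Set Implicit Arguments.
Unset Strict Implicit.
Unset Printing Implicit Defensive.

Definition is_partition (n : nat) (s : seq nat) : bool :=
  [&& sorted geq s, all (fun x => 0 < x) s & sumn s == n].

Fixpoint seqs_of_len (k : nat) (vals : seq nat) : seq (seq nat) :=
  match k with
  | 0 => [:: [::]]
  | k'.+1 => [seq x :: s | x <- vals, s <- seqs_of_len k' vals]
  end.

(* Candidate sequences: length <= n, entries in {1,..,n}; every partition
   of n occurs exactly once among them. *)
Definition candidates (n : nat) : seq (seq nat) :=
  flatten [seq seqs_of_len k (iota 1 n) | k <- iota 0 n.+1].

Definition partitions (n : nat) : seq (seq nat) :=
  [seq s <- candidates n | is_partition n s].

Definition is_mex (A a : nat) (s : seq nat) (k : nat) : bool :=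
  [&& 0 < k, k == a %[mod A], k \notin s &
      all (fun j => (j == a %[mod A]) ==> (j \in s)) (iota 1 k.-1)].

(* mex_{A,a}(s) == a (mod 2A).  For a > 0, A > 0 the mex is at most
   a + A * sumn s, so searching k in {1,..,a + A * sumn s} finds it. *)
Definition mex_cond (A a : nat) (s : seq nat) : bool :=
  has (fun k => is_mex A a s k && (k == a %[mod 2 * A])) (iota 1 (a + A * sumn s)).

Definition p_mex (A a n : nat) : nat := count (mex_cond A a) (partitions n).

Definition even_count (A a : nat) (X : R) : nat :=
  count (fun n => ~~ odd (p_mex A a n)) (iota 1 (Z.to_nat (Int_part X))).

(* Main.v *)
Require Import Defs.
From mathcomp Require Import all_boot.
From Stdlib Require Import Reals.
From mathcomp Require Import all_algebra zify ring.
From Stdlib Require Import Lra Lia.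
From Stdlib Require Znat.
Set Implicit Arguments. Unset Strict Implicit.

Lemma mem_seqs k vals s : (s \in seqs_of_len k vals) = (size s == k) && all (mem vals) s.
Proof.
elim: k s => [|k IH] [|x s] //=.
- apply/negbTE/negP => /allpairsP [[y r] /= [_ _]] //.

- apply/idP/idP.
  + case/allpairsP => -[y r] /= [Hy Hr [-> ->]]. by move: Hr; rewrite IH => /andP[/eqP -> ->]; rewrite Hy eqxx.
  + move=> /and3P[/eqP [Hs] Hx Ha]. apply/allpairsP. exists (x, s) => /=; split => //.
    by rewrite IH Hs eqxx.
Qed.

Lemma uniq_seqs k vals : uniq vals -> uniq (seqs_of_len k vals).
Proof.
move=> Hv; elim: k => [|k IH] //=.
apply: allpairs_uniq => //. by move=> [x1 s1] [x2 s2] _ _ /= [-> ->].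
Qed.

Lemma uniq_flat (l : seq nat) vals : uniq vals -> uniq l ->
  uniq (flatten [seq seqs_of_len k vals | k <- l]).
Proof.
move=> Hv; elim: l => [|k l IH] //= /andP[Hk Hl].
rewrite cat_uniq uniq_seqs // IH // andbT.
apply/hasPn => s /flattenP [y /mapP [k' Hk' ->]].
rewrite !mem_seqs => /andP[/eqP Hs _]; apply/negP => /andP[/eqP Hs' _].
by move: Hk; rewrite -Hs' Hs Hk'.
Qed.

Lemma mem_candidates n s : (s \in candidates n) = (size s <= n) && all (mem (iota 1 n)) s.
Proof.
apply/flattenP/idP.
- case=> y /mapP [k Hk ->]; rewrite mem_seqs => /andP[/eqP Hs ->].
  by move: Hk; rewrite mem_iota Hs andbT add0n ltnS.
- move=> /andP[Hs Ha]; exists (seqs_of_len (size s) (iota 1 n)).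
  + apply/mapP; exists (size s) => //; by rewrite mem_iota.
  + by rewrite mem_seqs eqxx.
Qed.

Lemma uniq_candidates n : uniq (candidates n).
Proof. apply: uniq_flat; exact: iota_uniq. Qed.

Lemma le_sumn s x : x \in s -> x <= sumn s.
Proof. elim: s => [|y s IH] //=; rewrite inE => /orP[/eqP ->|/IH]; lia. Qed.

Lemma size_sumn s : all (fun x => 0 < x) s -> size s <= sumn s.
Proof. elim: s => [|y s IH] //= /andP[Hy /IH]; lia. Qed.

Lemma mem_partitions n s : (s \in partitions n) = is_partition n s.
Proof.
rewrite mem_filter andbC; case Hp: (is_partition n s) => //=.
move: Hp => /and3P[_ Hpos /eqP Hsum].
rewrite mem_candidates -Hsum (size_sumn Hpos) /=.
rewrite andbT; apply/allP => x Hx; change (x \in iota 1 (sumn s)); rewrite mem_iota; move/allP: Hpos => /(_ x Hx).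
have := le_sumn Hx; lia.
by rewrite andbF.
Qed.

Lemma uniq_partitions n : uniq (partitions n).
Proof. apply: filter_uniq; exact: uniq_candidates. Qed.

Fixpoint rems (L s : seq nat) : seq nat :=
  if L is x :: L' then rems L' (rem x s) else s.

Lemma rems_perm L s : uniq L -> all (fun x => x \in s) L -> perm_eq s (L ++ rems L s).
Proof.
elim: L s => [|x L IH] s //= /andP[HxL HL] /andP[Hx Hall].
apply: perm_trans (perm_to_rem Hx) _.
rewrite perm_cons; apply: IH => //.
apply/allP => y Hy; apply: rem_mem; last by move/allP: Hall => /(_ y Hy).
by apply/negP => /eqP Hyx; move: HxL; rewrite -Hyx Hy.
Qed.

Lemma rems_subseq L s : subseq (rems L s) s.
Proof.
elim: L s => [|x L IH] s /=; first exact: subseq_refl.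
exact: subseq_trans (IH _) (rem_subseq _ _).
Qed.

Lemma geq_trans : transitive geq.
Proof. move=> x y z; lia. Qed.
Lemma geq_anti : antisymmetric geq.
Proof. move=> x y; lia. Qed.
Lemma geq_tot : total geq.
Proof. move=> x y; lia. Qed.

Lemma sorted_perm_eq s1 s2 : sorted geq s1 -> sorted geq s2 -> perm_eq s1 s2 -> s1 = s2.
Proof. exact: (sorted_eq geq_trans geq_anti). Qed.

Lemma count_contain (L : seq nat) (P : pred (seq nat)) n :
  uniq L -> all (fun x => 0 < x) L ->
  (forall s1 s2, perm_eq s1 s2 -> P s1 = P s2) ->
  count (fun s => all (fun x => x \in s) L && P s) (partitions n)
  = if sumn L <= n then count (fun r => P (L ++ r)) (partitions (n - sumn L)) else 0.
Proof.
move=> HuL HpL HP.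
set D := filter (fun s => all (fun x => x \in s) L && P s) (partitions n).
have HD s : s \in D -> [/\ is_partition n s, all (fun x => x \in s) L & P s].
  by rewrite mem_filter mem_partitions => /andP[/andP[? ?] ?].
have Hf s : s \in D -> [/\ perm_eq s (L ++ rems L s), is_partition (n - sumn L) (rems L s),
      sumn L <= n & P (L ++ rems L s)].
  move=> /HD [Hs HsL HPs]. have Hperm := rems_perm HuL HsL.
  have Hsum := perm_sumn Hperm. rewrite sumn_cat in Hsum.
  move: Hs => /and3P[Hsort Hpos /eqP Hn].
  split => //.
  - apply/and3P; split.
    + exact: (subseq_sorted geq_trans (rems_subseq L s) Hsort).
    + apply/allP => x Hx; move/allP: Hpos; apply; exact: (mem_subseq (rems_subseq L s)).
    + apply/eqP; lia.
  - lia.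
  - by rewrite -(HP _ _ Hperm).
rewrite -size_filter -/D.
case: leqP => HLn; last first.
  case: D HD Hf => [|s D'] // _ /(_ s); rewrite inE eqxx => /(_ isT) [_ _ H _]; lia.
have Hinj : {in D &, injective (rems L)}.
  move=> s1 s2 D1 D2 E.
  have [H1 _ _ _] := Hf _ D1. have [H2 _ _ _] := Hf _ D2.
  have [/and3P[S1 _ _] _ _] := HD _ D1. have [/and3P[S2 _ _] _ _] := HD _ D2.
  apply: sorted_perm_eq => //. apply: perm_trans H1 _. by rewrite E perm_sym.
rewrite -(size_map (rems L)) -size_filter.
apply: perm_size; apply: uniq_perm.
- rewrite map_inj_in_uniq //; apply: filter_uniq; exact: uniq_partitions.
- apply: filter_uniq; exact: uniq_partitions.
move=> r; apply/mapP/idP.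
- case=> s Ds ->; have [_ Hr _ HPr] := Hf _ Ds.
  by rewrite mem_filter HPr mem_partitions Hr.
- rewrite mem_filter mem_partitions => /andP[HPr Hr].
  exists (sort geq (L ++ r)).
  + have Hp : perm_eq (sort geq (L ++ r)) (L ++ r) by rewrite perm_sort.
    rewrite mem_filter mem_partitions (HP _ _ Hp) HPr andbT.
    apply/andP; split.
    * apply/allP => x Hx; rewrite (perm_mem Hp) mem_cat Hx //.
    * move: Hr => /and3P[Sr Pr /eqP Sumr].
      apply/and3P; split.
      -- exact: (sort_sorted geq_tot).
      -- apply/allP => x; rewrite (perm_mem Hp) mem_cat => /orP[] Hx.
         ++ by move/allP: HpL => /(_ x Hx).
         ++ by move/allP: Pr => /(_ x Hx).
      -- by rewrite (perm_sumn Hp) sumn_cat Sumr; apply/eqP; lia.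
  + set s := sort geq (L ++ r).
    have Hp : perm_eq s (L ++ r) by rewrite perm_sort.
    have HsL : all (fun x => x \in s) L by apply/allP => x Hx; rewrite (perm_mem Hp) mem_cat Hx.
    have H1 := rems_perm HuL HsL.
    move: Hr => /and3P[Sr _ _].
    apply: sorted_perm_eq => //.
    * exact: (subseq_sorted geq_trans (rems_subseq L s) (sort_sorted geq_tot _)).
    * rewrite -(perm_cat2l L); rewrite perm_sym in H1.
rewrite perm_sym; exact: perm_trans H1 Hp.
Qed.

Lemma sum_count (P : pred nat) K : \sum_(j < K) (P j : nat) = count P (iota 0 K).
Proof.
elim: K => [|K IH]; first by rewrite big_ord0.
have E : iota 0 K.+1 = iota 0 K ++ [:: K] by rewrite -addn1 iotaD.
by rewrite big_ord_recr IH E count_cat /= addn0.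
Qed.

Lemma cnt_le J K : J < K -> count (fun j => j <= J) (iota 0 K) = J.+1.
Proof.
move=> H; rewrite -(subnKC H) iotaD count_cat.
rewrite (eq_in_count (a2 := predT)); last by move=> x; rewrite mem_iota /=; lia.
rewrite count_predT size_iota (eq_in_count (a2 := pred0)); last by move=> x; rewrite mem_iota /=; lia.
by rewrite count_pred0 addn0.
Qed.

Lemma count_split T (P Q : pred T) l :
  count P l = count (fun s => P s && ~~ Q s) l + count (fun s => Q s && P s) l.
Proof. elim: l => [|x l IH] //=; rewrite IH; case: (P x); case: (Q x) => /=; lia. Qed.

Definition pk k n := count (fun s => all (fun x => x <= k) s) (partitions n).

Lemma all_le_notin k s : all (fun x => x <= k.+1) s && (k.+1 \notin s) = all (fun x => x <= k) s.
Proof.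
elim: s => [|x s IH] //=; rewrite inE negb_or -IH.
have -> : (x <= k) = (x <= k.+1) && (x != k.+1) by apply/idP/idP; [move=> H; apply/andP; split; [lia|apply/eqP; lia] | move/andP=> [H1 /eqP H2]; lia].
rewrite eq_sym; by case: (x <= k.+1); case: (x != k.+1); case: (all _ s); case: (k.+1 \in s).
Qed.

Lemma pk_rec k n : pk k.+1 n = pk k n + (if k.+1 <= n then pk k.+1 (n - k.+1) else 0).
Proof.
rewrite /pk (count_split _ (fun s => k.+1 \in s)).
rewrite (eq_count (all_le_notin k)).
congr (_ + _).
have := (@count_contain [:: k.+1] (fun s => all (fun x => x <= k.+1) s) n isT isT).
rewrite /= addn0 ltnSn /=. move=> <-.
- apply: eq_count => s /=. by rewrite andbT.
- move=> s1 s2 H; exact: perm_all.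
Qed.

Lemma pk0 n : pk 0 n = (n == 0).
Proof.
rewrite /pk (eq_in_count (a2 := pred1 [::])).
- rewrite count_uniq_mem ?uniq_partitions // mem_partitions /is_partition /=.
  by case: n.
- move=> s; rewrite mem_partitions => /and3P[_ Hp _].
  case: s Hp => [|x s] //= /andP[Hx _]. by rewrite leqn0 (gtn_eqF Hx).
Qed.

Lemma pk_big k n : n <= k -> pk k n = size (partitions n).
Proof.
move=> H; rewrite /pk -count_predT; apply: eq_in_count => s.
rewrite mem_partitions => /and3P[_ _ /eqP Hs] /=.
apply/allP => x Hx; have := le_sumn Hx; lia.
Qed.

Definition Jm (A a : nat) (s : seq nat) :=
  find (fun i => a + i * A \notin s) (iota 0 (sumn s).+2).

Lemma Jm_spec A a s : 0 < A ->
  a + Jm A a s * A \notin s /\ forall i, i < Jm A a s -> a + i * A \in s.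
Proof.
move=> HA.
have Hhas : has (fun i => a + i * A \notin s) (iota 0 (sumn s).+2).
  apply/hasP; exists (sumn s).+1; first by rewrite mem_iota; lia.
  apply/negP => /le_sumn; nia.
have Hlt : Jm A a s < (sumn s).+2.
  by have := Hhas; rewrite has_find size_iota.
split.
- have := nth_find 0 Hhas. by rewrite nth_iota.
- move=> i Hi. have := before_find 0 Hi. rewrite nth_iota; last by lia.
  by move/negbFE.
Qed.

Lemma Jm_le A a s : 0 < A -> 0 < a -> Jm A a s <= sumn s.
Proof.
move=> HA Ha; have [_ H] := Jm_spec a s HA.
case E: (Jm A a s) => [|j] //.
have Hj : j < Jm A a s by rewrite E.
have := le_sumn (H j Hj). nia.
Qed.

Definition Lj (A a j : nat) := [seq a + i * A | i <- iota 0 j].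
Definition Cj (A a j : nat) (s : seq nat) := all (fun x => x \in s) (Lj A a j).
Definition ej (A a j : nat) := sumn (Lj A a j).

Lemma Cj_iff A a j s : 0 < A -> Cj A a j s = (j <= Jm A a s).
Proof.
move=> HA; have [H1 H2] := Jm_spec a s HA.
apply/allP/idP.
- move=> H; rewrite leqNgt; apply/negP => Hlt.
  have : a + Jm A a s * A \in Lj A a j by apply/mapP; exists (Jm A a s) => //; rewrite mem_iota; lia.
  by move/H; move: H1 => /negP.
- move=> Hj x /mapP [i]; rewrite mem_iota => Hi ->; apply: H2; lia.
Qed.

Lemma Lj_uniq A a j : 0 < A -> uniq (Lj A a j).
Proof.
move=> HA; rewrite map_inj_uniq ?iota_uniq // => x y /eqP; rewrite eqn_add2l eqn_pmul2r //; move/eqP.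
by [].
Qed.

Lemma Lj_pos A a j : 0 < a -> all (fun x => 0 < x) (Lj A a j).
Proof. move=> Ha; apply/allP => x /mapP [i _ ->]; lia. Qed.

Lemma count_Cj A a j n : 0 < A -> 0 < a ->
  count (Cj A a j) (partitions n) = if ej A a j <= n then size (partitions (n - ej A a j)) else 0.
Proof.
move=> HA Ha.
have := (@count_contain (Lj A a j) predT n (Lj_uniq a j HA) (Lj_pos A j Ha) (fun _ _ _ => erefl)).
rewrite /ej; case: ifP => _ <-.
- by apply: eq_count => s; rewrite /Cj andbT.
- by apply: eq_count => s; rewrite /Cj andbT.
Qed.

Lemma cong_form A a j : 0 < a <= A -> 0 < j -> j = a %[mod A] -> exists i, j = a + i * A.
Proof.
move=> /andP[Ha HaA] Hj Hm. have Hd := divn_eq j A.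
case: (ltngtP a A) HaA => // Hlt _.
- rewrite Hm (modn_small Hlt) in Hd. exists (j %/ A); lia.
- subst a; rewrite Hm modnn addn0 in Hd. exists (j %/ A).-1.
  case E: (j %/ A) Hd => [|q] Hd; first by lia. rewrite Hd; lia.
Qed.

Lemma cong_add A a i : a + i * A = a %[mod A].
Proof. by apply/eqP; rewrite -[X in _ == X %[mod _]]addn0 eqn_modDl mod0n modnMl. Qed.

Lemma is_mex_J A a s k : 0 < a <= A ->
  is_mex A a s k = (k == a + Jm A a s * A).
Proof.
move=> Hr; have HA : 0 < A by lia. have Ha : 0 < a by lia.
have [H1 H2] := Jm_spec a s HA.
apply/idP/idP.
- move=> /and4P[Hk /eqP Hm Hn /allP Hall].
  have [i Ei] := cong_form Hr Hk Hm. subst k.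
  case: (ltngtP i (Jm A a s)) => Hi.
  + by move: Hn; rewrite H2.
  + have : a + Jm A a s * A \in iota 1 (a + i * A).-1 by rewrite mem_iota; nia.
    move/Hall; rewrite cong_add eqxx /= => H. by move: H1; rewrite H.
  + by rewrite Hi.
- move/eqP => ->; apply/and4P; split => //.
  + lia.
  + by apply/eqP; rewrite cong_add.
  + apply/allP => x; rewrite mem_iota => Hx; apply/implyP => /eqP Hm.
    have Hx0 : 0 < x by lia.
    have [i Ei] := cong_form Hr Hx0 Hm.
    subst x; apply: H2. nia.
Qed.

Lemma mex_cond_J A a s : 0 < a <= A -> all (fun x => 0 < x) s ->
  mex_cond A a s = ~~ odd (Jm A a s).
Proof.
move=> Hr Hpos; have HA : 0 < A by lia. have Ha : 0 < a by lia.
rewrite /mex_cond (eq_has (a2 := fun k => (k == a + Jm A a s * A) && (k == a %[mod 2 * A]))); last first.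
  by move=> k; rewrite is_mex_J.
have Hle := Jm_le s HA Ha.
have Hin : a + Jm A a s * A \in iota 1 (a + A * sumn s) by rewrite mem_iota; nia.
apply/hasP/idP.
- move=> [k Hk /andP[/eqP -> Hc]]. move: Hc.
  rewrite -[X in _ == X %[mod _]]addn0 eqn_modDl mod0n.
  by rewrite -dvdn2 -(dvdn_pmul2r (d := 2) HA) mulnC; rewrite /dvdn.
- move=> Hodd; exists (a + Jm A a s * A) => //; rewrite eqxx /=.
  rewrite -[X in _ == X %[mod _]]addn0 eqn_modDl mod0n.
  move: Hodd; rewrite -dvdn2 -(dvdn_pmul2r (d := 2) HA) mulnC; by rewrite /dvdn.
Qed.

Lemma parity_list A a K (l : seq (seq nat)) : 0 < A ->
  (forall s, s \in l -> Jm A a s < K) ->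
  odd (count (fun s => ~~ odd (Jm A a s)) l) = odd (\sum_(j < K) count (Cj A a j) l).
Proof.
move=> HA; elim: l => [|s l IH] Hl /=.
- by rewrite big1.
- rewrite big_split /= oddD [X in _ = X]oddD -IH; last by move=> x Hx; apply: Hl; rewrite inE Hx orbT.
  rewrite (eq_bigr (fun j : 'I_K => ((j : nat) <= Jm A a s) : nat)); last first.
    by move=> j _; rewrite Cj_iff.
  rewrite (sum_count (fun j => j <= Jm A a s)) cnt_le; last by apply: Hl; rewrite inE eqxx.
  rewrite /=. by case: (odd (Jm A a s)).
Qed.

Lemma pmex_parity A a n K : 0 < a <= A -> n < K ->
  odd (p_mex A a n) = odd (\sum_(j < K) (if ej A a j <= n then size (partitions (n - ej A a j)) else 0)).
Proof.
move=> Hr HK; have HA : 0 < A by lia. have Ha : 0 < a by lia.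
rewrite /p_mex (eq_in_count (a2 := fun s => ~~ odd (Jm A a s))); last first.
  by move=> s; rewrite mem_partitions => /and3P[_ Hp _]; rewrite mex_cond_J.
rewrite (@parity_list A a K) //.
- by congr odd; apply: eq_bigr => j _; rewrite count_Cj.
- move=> s; rewrite mem_partitions => /and3P[_ _ /eqP Hs].
  have := Jm_le s HA Ha; lia.
Qed.

Import GRing.Theory.
Open Scope ring_scope.

Fixpoint T (k : nat) : nat := if k is k'.+1 then (T k' + k'.+1)%nat else 0%nat.
Definition pm (j : nat) : nat := (j.-1 * j + T j)%nat.
Definition pp (j : nat) : nat := (j * j + T j)%nat.

Definition tS (R : comNzRingType) (n k : nat) : {poly R} :=
  (-1) ^+ k * (\prod_(k.+1 <= i < n.+1) (1 - 'X^i)) * 'X^(n * k + T k).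
Definition AS (R : comNzRingType) (n : nat) : {poly R} := \sum_(k < n.+1) tS R n k.
Definition PentS (R : comNzRingType) (n : nat) : {poly R} :=
  \sum_(j < n.+1) (-1) ^+ j * 'X^(pm j) + \sum_(j < n) (-1) ^+ j.+1 * 'X^(pp j.+1).
Definition US (R : comNzRingType) (m k : nat) : {poly R} :=
  (-1) ^+ k.+1 * 'X^(m * k + T k) * \prod_(k <= i < m.+1) (1 - 'X^i).

Lemma tele (R : comNzRingType) (f : nat -> {poly R}) n :
  \sum_(k < n) (f k - f k.+1) = f 0%nat - f n.
Proof.
elim: n => [|n IH]; first by rewrite big_ord0 subrr.
rewrite big_ord_recr IH /=. by rewrite addrA subrK.
Qed.

Lemma step_term (R : comNzRingType) m k : (k <= m)%nat ->
  tS R m.+1 k = tS R m k + (US R m k - US R m k.+1).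
Proof.
move=> Hk.
rewrite /tS /US big_nat_recr /=; last by lia.
rewrite (big_ltn (m := k)); last by lia.
set P := \prod_(k.+1 <= i < m.+1) (1 - 'X^i).
have -> : (m.+1 * k + T k = (m * k + T k) + k)%nat by lia.
have -> : (m * k.+1 + T k.+1 = (m * k + T k) + k + m.+1)%nat by rewrite /=; lia.
rewrite !exprD !exprS.
ring.
Qed.

Lemma shanks (R : comNzRingType) n : AS R n = PentS R n.
Proof.
elim: n => [|m IH].
- rewrite /AS /PentS big_ord1 big_ord1 big_ord0 /tS /= big_geq //.
  rewrite addr0 mulr1 /pm. by rewrite [(0 * 0 + 0)%nat]/= expr0 mulr1.
- rewrite /AS big_ord_recr /=.
  rewrite (eq_bigr (fun k : 'I_m.+1 => tS R m k + (US R m k - US R m k.+1))); last first.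
    by move=> k _; apply: step_term; have := ltn_ord k; lia.
  rewrite big_split /= tele.
  have -> : \sum_(i < m.+1) tS R m i = AS R m by [].
  rewrite IH /PentS [X in _ = X + _]big_ord_recr [X in _ = _ + X]big_ord_recr /=.
  have U0 : US R m 0 = 0.
    rewrite /US (big_ltn (m := 0)) // expr0 subrr. by rewrite mul0r mulr0.
  rewrite U0 /US /tS !big_geq // !mulr1.
  have -> : (m.+1 * m.+1 + T m.+1 = pp m.+1)%nat by [].
  have -> : (m * m.+1 + T m.+1 = pm m.+1)%nat by [].
  rewrite !exprS. ring.
Qed.

Close Scope ring_scope.

Import GRing.Theory.
Open Scope ring_scope.

Definition eqL (R : nzRingType) (L : nat) (p q : {poly R}) := forall i, (i < L)%nat -> p`_i = q`_i.

Lemma eqL_mulr (R : nzRingType) L (p q r : {poly R}) : eqL L p q -> eqL L (p * r) (q * r).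
Proof.
move=> H i Hi; rewrite !coefM; apply: eq_bigr => j _; rewrite H //.
have := ltn_ord j; lia.
Qed.

Lemma eqL_mull (R : nzRingType) L (p q r : {poly R}) : eqL L p q -> eqL L (r * p) (r * q).
Proof.
move=> H i Hi; rewrite !coefM; apply: eq_bigr => j _; rewrite H //. lia.
Qed.

Lemma eqL_trans (R : nzRingType) L (p q r : {poly R}) : eqL L p q -> eqL L q r -> eqL L p r.
Proof. by move=> H1 H2 i Hi; rewrite H1 // H2. Qed.

Lemma eqL_sym (R : nzRingType) L (p q : {poly R}) : eqL L p q -> eqL L q p.
Proof. by move=> H i Hi; rewrite H. Qed.

Definition Eu (R : comNzRingType) (n : nat) : {poly R} := \prod_(1 <= i < n.+1) (1 - 'X^i).

Lemma Eu_trunc (R : comNzRingType) n : eqL n.+1 (Eu R n) (PentS R n).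
Proof.
move=> i Hi; rewrite -shanks /AS big_ord_recl coefD.
have -> : tS R n (@ord0 n) = Eu R n by rewrite /tS /Eu /= expr0 mul1r muln0 /= expr0 mulr1.
rewrite coef_sum big1 ?addr0 // => k _.
rewrite /tS coefMXn ifT //.
rewrite lift0 /= mulnS. lia.
Qed.

Definition Qk (R : comNzRingType) (k L : nat) : {poly R} := \poly_(i < L) (pk k i)%:R.

Lemma Qk_step (R : comNzRingType) k L : eqL L (Qk R k.+1 L * (1 - 'X^(k.+1))) (Qk R k L).
Proof.
move=> i Hi; rewrite mulrBr mulr1 coefB coefMXn !coef_poly Hi pk_rec.
case: (ltnP i k.+1) => H.
- by rewrite addn0 subr0.
- rewrite ifT; last by lia. by rewrite natrD addrK.
Qed.

Lemma genfun (R : comNzRingType) k L : eqL L (Qk R k L * Eu R k) 1.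
Proof.
elim: k => [|k IH].
- move=> i Hi; rewrite /Eu big_geq // mulr1 coef_poly Hi pk0 coef1.
  by case: i {Hi}.
- rewrite /Eu big_nat_recr //= mulrA [X in eqL _ X]mulrC mulrA.
  apply: eqL_trans _ IH. rewrite [X in eqL _ _ X]mulrC /Eu.
  rewrite [X in eqL _ _ X]mulrC. apply: eqL_mulr. rewrite mulrC. exact: Qk_step.
Qed.

Close Scope ring_scope.

Import GRing.Theory.
Open Scope ring_scope.

Lemma F2nat n : ((n%:R : 'F_2) = (odd n)%:R)%R.
Proof. elim: n => [//|n IH]. rewrite mulrS IH /=. case: (odd n) => /=. by apply/eqP. by rewrite addr0. Qed.

Lemma F2m1 : (-1 : {poly 'F_2}) = 1.
Proof. rewrite -polyC1 -polyCN; congr polyC; by apply/eqP. Qed.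

Lemma Pent_F2 n : PentS 'F_2 n = \sum_(j < n.+1) 'X^(pm j) + \sum_(j < n) 'X^(pp j.+1).
Proof.
rewrite /PentS F2m1; congr (_ + _); apply: eq_bigr => j _; by rewrite expr1n mul1r.
Qed.

Definition cm N := count (fun j => pm j <= N)%nat (iota 0 N.+1).
Definition cp N := count (fun j => pp j.+1 <= N)%nat (iota 0 N).

Lemma key A a N : (0 < a <= A)%nat -> odd (cm N + cp N) ->
  all (fun j => ej A a j != N) (iota 0 N.+1) ->
  ~~ (all (fun j => (pm j <= N)%nat ==> odd (p_mex A a (N - pm j))) (iota 0 N.+1) &&
      all (fun j => (pp j.+1 <= N)%nat ==> odd (p_mex A a (N - pp j.+1))) (iota 0 N)).
Proof.
move=> Hr Hodd He; apply/negP => /andP[/allP H1 /allP H2].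
set L := N.+1.
pose Rp : {poly 'F_2} := \poly_(i < L) (p_mex A a i)%:R.
pose Sp : {poly 'F_2} := \sum_(j < L) 'X^(ej A a j).
pose Q := Qk 'F_2 N L.
have HA : eqL L Rp (Sp * Q).
  move=> i Hi; rewrite coef_poly Hi F2nat (@pmex_parity A a i L) // -F2nat natr_sum.
  rewrite mulr_suml coef_sum; apply: eq_bigr => j _.
  rewrite coefXnM coef_poly. case: leqP => Hj.
  + rewrite ifT; last by lia.
    rewrite pk_big //. lia.
  + by [].
have HB : eqL L (Q * Eu 'F_2 N) 1 by apply: genfun.
have HC : eqL L (Eu 'F_2 N) (PentS 'F_2 N) by apply: Eu_trunc.
have HD : eqL L (Rp * PentS 'F_2 N) Sp.
  apply: eqL_trans (eqL_mull Rp (eqL_sym HC)) _.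
  apply: eqL_trans (eqL_mulr (Eu 'F_2 N) HA) _.
  rewrite -mulrA. have := eqL_mull Sp HB. by rewrite mulr1.
have := HD N (ltnSn N).
have -> : Sp`_N = 0.
  rewrite coef_sum big1 // => j _; rewrite coefXn.
  have := He; move/allP => /(_ j); rewrite mem_iota /= => /(_ (ltn_ord j)).
  by rewrite eq_sym => /negbTE ->.
rewrite Pent_F2 mulrDr !mulr_sumr coefD !coef_sum.
rewrite (eq_bigr (fun j : 'I_N.+1 => ((pm j <= N)%nat : nat)%:R)); last first.
  move=> j _; rewrite coefMXn coef_poly; case: ltnP => Hj; first by [].
  rewrite ifT; last by lia. rewrite F2nat.
  have Hm : (j : nat) \in iota 0 N.+1 by rewrite mem_iota /=.
  by have := H1 j Hm; rewrite Hj /= => ->.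
rewrite [X in _ + X](eq_bigr (fun j : 'I_N => ((pp j.+1 <= N)%nat : nat)%:R)); last first.
  move=> j _; rewrite coefMXn coef_poly; case: ltnP => Hj; first by [].
  rewrite ifT; last by lia. rewrite F2nat.
  have Hm : (j : nat) \in iota 0 N by rewrite mem_iota /=.
  by have := H2 j Hm; rewrite Hj /= => ->.
rewrite -!natr_sum (sum_count (fun j => pm j <= N)%nat) (sum_count (fun j => pp j.+1 <= N)%nat).
rewrite -natrD F2nat -/(cm N) -/(cp N) Hodd.
by move/eqP; rewrite oner_eq0.
Qed.

Close Scope ring_scope.

Lemma T2 j : 2 * T j = j * j.+1.
Proof. elim: j => [|j IH] //=. rewrite mulnDr IH. nia. Qed.

Lemma pm_pp j : pm j <= pp j.
Proof. rewrite /pm /pp. have := T2 j. case: j => [|j] /=; nia. Qed.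

Lemma pp_pm j : pm j.+1 = pp j + j.*2.+1.
Proof. rewrite /pm /pp /=. have := T2 j. nia. Qed.

Lemma pm_step j : pm j <= pm j.+1.
Proof. have := pm_pp j; rewrite pp_pm; lia. Qed.
Lemma pp_step j : pp j <= pp j.+1.
Proof. have := pm_pp j.+1; rewrite pp_pm; lia. Qed.

Lemma pm_mono : {homo pm : i j / i <= j}.
Proof. apply: homo_leq => //; [move=> ? ? ?; lia | exact: pm_step]. Qed.
Lemma pp_mono : {homo pp : i j / i <= j}.
Proof. apply: homo_leq => //; [move=> ? ? ?; lia | exact: pp_step]. Qed.

Lemma pm_sq j : j * j <= pm j.
Proof. rewrite /pm; have := T2 j; case: j => [|j] /=; nia. Qed.

Lemma pp_ge j : j <= pp j.
Proof. rewrite /pp; nia. Qed.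

Lemma cnt_lt J K : J <= K -> count (fun j => j < J) (iota 0 K) = J.
Proof.
move=> H; rewrite -(subnKC H) iotaD count_cat.
rewrite (eq_in_count (a2 := predT)); last by move=> x; rewrite mem_iota /=; lia.
rewrite count_predT size_iota (eq_in_count (a2 := pred0)); last by move=> x; rewrite mem_iota /=; lia.
by rewrite count_pred0 addn0.
Qed.

Lemma odd_interval j0 N : pp j0 <= N < pm j0.+1 -> odd (cm N + cp N).
Proof.
move=> /andP[H1 H2].
have Hj0 := pp_ge j0.
have -> : cm N = j0.+1.
  rewrite /cm -(@cnt_lt j0.+1 N.+1); last by lia.
  apply: eq_in_count => l _ /=; apply/idP/idP => H.
  + rewrite ltnS leqNgt; apply/negP => Hl. have := pm_mono Hl. lia.
  + have H' : l <= j0 by lia. have := pm_mono H'; have := pm_pp j0; lia.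
have -> : cp N = j0.
  rewrite /cp -(@cnt_lt j0 N); last by lia.
  apply: eq_in_count => l _ /=; apply/idP/idP => H.
  + rewrite leqNgt; apply/negP => Hl. have := pp_mono Hl. have := pm_pp j0.+1. lia.
  + have := pp_mono H. lia.
rewrite addSn /= oddD. by case: (odd j0).
Qed.

Lemma pmex0 A a : 0 < a <= A -> odd (p_mex A a 0).
Proof. move=> Hr; by rewrite (@pmex_parity A a 0 1) // big_ord1. Qed.

Definition Pset (i : nat) := [seq pm j | j <- iota 0 i.+1] ++ [seq pp j | j <- iota 1 i].

Definition badN A a N := odd (cm N + cp N) && all (fun j => ej A a j != N) (iota 0 N.+1).

Lemma witness A a x i N : 0 < a <= A -> x < i.+1 * i.+1 -> N <= x -> badN A a N ->
  N \in [seq n + g | n <- [seq n <- iota 1 x | ~~ odd (p_mex A a n)], g <- Pset i].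
Proof.
move=> Hr Hx HN /andP[Hodd He].
have := key Hr Hodd He; rewrite negb_and => /orP[] /allPn [j Hj].
- rewrite negb_imply => /andP[Hpm Hev].
  have Hn0 : 0 < N - pm j.
    case E: (N - pm j) Hev => [|n] //. by rewrite pmex0.
  have -> : N = (N - pm j) + pm j by lia.
  apply: allpairs_f.
  + rewrite mem_filter Hev mem_iota /=; lia.
  + rewrite mem_cat; apply/orP; left; apply: map_f; rewrite mem_iota /=.
    have := pm_sq j. nia.
- rewrite negb_imply => /andP[Hpm Hev].
  have Hn0 : 0 < N - pp j.+1.
    case E: (N - pp j.+1) Hev => [|n] //. by rewrite pmex0.
  have -> : N = (N - pp j.+1) + pp j.+1 by lia.
  apply: allpairs_f.
  + rewrite mem_filter Hev mem_iota /=; lia.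
  + rewrite mem_cat; apply/orP; right; apply: map_f; rewrite mem_iota /=.
    have := pm_sq j.+1. have := pm_pp j.+1. nia.
Qed.

Lemma count_imp T (P Q R : pred T) l : (forall x, P x -> Q x || R x) ->
  count P l <= count Q l + count R l.
Proof.
move=> H; elim: l => [|x l IH] //=.
case E: (P x) (H x) => [|] /=.
- move=> /(_ isT) /orP[] -> /=; lia.
- move=> _; lia.
Qed.

Lemma ej_ge A a j : 0 < a -> 0 < A -> T j <= ej A a j.
Proof.
move=> Ha HA; elim: j => [|j IH] //.
rewrite /ej /Lj -addn1 iotaD map_cat sumn_cat /= -/(Lj A a j) -/(ej A a j).
have -> : T (j + 1) = T j + j.+1 by rewrite addn1.
nia.
Qed.

Lemma count_inE A a x i : 0 < a -> 0 < A -> x < i.+1 * i.+1 ->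
  count (fun N => ~~ all (fun j => ej A a j != N) (iota 0 N.+1)) (iota 0 x.+1) <= (i.*2).+2.
Proof.
move=> Ha HA Hx.
rewrite -size_filter.
have -> : (i.*2).+2 = size [seq ej A a j | j <- iota 0 (i.*2).+2] by rewrite size_map size_iota.
apply: uniq_leq_size; first by apply: filter_uniq; exact: iota_uniq.
move=> N; rewrite mem_filter mem_iota => /andP[/allPn [j Hj] /negPn /eqP <-] HN.
apply: map_f; rewrite mem_iota /=.
have := ej_ge j Ha HA; have := T2 j. nia.
Qed.

Lemma count_oc J : (J.+1 * J.+1) <= count (fun N => odd (cm N + cp N)) (iota 0 (pm J.+1)).
Proof.
elim: J => [|J IH].
- by [].
- have E1 := pm_pp J.+1. have E2 := pp_pm J.+1.
  have -> : pm J.+2 = pm J.+1 + (pp J.+1 - pm J.+1) + (pm J.+2 - pp J.+1) by lia.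
  rewrite iotaD iotaD !count_cat.
  rewrite (eq_in_count (a1 := fun N => odd (cm N + cp N)) (a2 := predT)
             (s := iota (0 + (pm J.+1 + (pp J.+1 - pm J.+1))) (pm J.+2 - pp J.+1))); last first.
    move=> N; rewrite mem_iota /= => HN; apply: (@odd_interval J.+1); lia.
  rewrite count_predT size_iota. lia.
Qed.

Lemma main_nat A a x i : 0 < a <= A -> i * i <= x -> x < i.+1 * i.+1 -> 64 <= i ->
  i <= 24 * count (fun n => ~~ odd (p_mex A a n)) (iota 1 x).
Proof.
move=> Hr Hx1 Hx2 Hi. have HA : 0 < A by lia. have Ha : 0 < a by lia.
set B := count _ _.
have Hcb : count (badN A a) (iota 0 x.+1) <= B * (i.*2).+1.
  rewrite -size_filter.
  have -> : B * (i.*2).+1 = size [seq n + g | n <- [seq n <- iota 1 x | ~~ odd (p_mex A a n)], g <- Pset i].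
    by rewrite size_allpairs size_filter size_cat !size_map !size_iota; congr (_ * _); lia.
  apply: uniq_leq_size; first by apply: filter_uniq; exact: iota_uniq.
  move=> N; rewrite mem_filter mem_iota => /andP[Hb HN].
  apply: (witness Hr Hx2) => //; lia.
set J := i %/ 2.
have HJ1 : J.*2 <= i by rewrite /J; lia.
have HJ2 : i <= J.*2.+1 by rewrite /J; lia.
have Hpm : pm J.+1 <= x.+1.
  have := pp_pm J. rewrite /pp. have := T2 J. nia.
have Hco : J.+1 * J.+1 <= count (fun N => odd (cm N + cp N)) (iota 0 x.+1).
  rewrite -(subnKC Hpm) iotaD count_cat. have := count_oc J. lia.
have Hci := count_inE Ha HA Hx2.
have Himp := @count_imp _ (fun N => odd (cm N + cp N)) (badN A a)
   (fun N => ~~ all (fun j => ej A a j != N) (iota 0 N.+1)) (iota 0 x.+1).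
have : count (fun N => odd (cm N + cp N)) (iota 0 x.+1) <=
       count (badN A a) (iota 0 x.+1) + count (fun N => ~~ all (fun j => ej A a j != N) (iota 0 N.+1)) (iota 0 x.+1).
  apply: Himp => N H; by rewrite /badN H /= orbN.
move=> Htot.
have Hsq : (J.+1 * J.+1) <= B * (i.*2).+1 + (i.*2).+2 by lia.
rewrite leqNgt; apply/negP => Hlt.
have H3 : (24 * B + 1) * (i.*2).+1 <= i * (i.*2).+1 by apply: leq_mul; lia.
have H4 : i.+1 * i.+1 <= (J.+1).*2 * (J.+1).*2 by apply: leq_mul; lia.
have H5 : 64 * i <= i * i by apply: leq_mul.
have E1 : i.+1 * i.+1 = i * i + 2 * i + 1 by nia.
have E2 : (J.+1).*2 * (J.+1).*2 = 4 * (J.+1 * J.+1) by nia.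
have E3 : (24 * B + 1) * (i.*2).+1 = 24 * (B * (i.*2).+1) + (i.*2).+1 by nia.
have E4 : i * (i.*2).+1 = 2 * (i * i) + i by nia.
rewrite E3 E4 in H3. rewrite E1 E2 in H4.
move: H3 H4 H5 Hsq. set P := B * _. set Q := i * i. set R := J.+1 * J.+1.
move=> H3 H4 H5 Hsq. lia.
Qed.

Delimit Scope nat_scope with N.
Delimit Scope R_scope with R.
Delimit Scope Z_scope with Z.

Theorem theorem1p1 (t m : nat) (ht : (0 < t)%N) (hm : (0 < m)%N) :
  exists c : R, (0 < c)%R /\
  exists X0 : R, forall X : R, (X0 <= X)%R ->
    (c * sqrt (X / 3) <= INR (even_count (m * t) t X))%R.
Proof.
exists (1/24)%R; split; first lra.
exists 4096%R => X HX.
have Hr : (0 < t <= m * t)%N.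
  apply/andP; split => //. by rewrite leq_pmull.
have [Hip1 Hip2] := base_Int_part X.
set z := Int_part X in Hip1 Hip2 *.
have Hz : (4096 <= z)%Z.
  have : (4095 < IZR z)%R by lra.
  move/lt_IZR; lia.
set x := Z.to_nat z.
have Hxz : INR x = IZR z.
  by rewrite /x INR_IZR_INZ Znat.Z2Nat.id; last lia.
rewrite /even_count -/z -/x.
have [Hs1 Hs2] := Nat.sqrt_spec x (Nat.le_0_l x).
set i := Nat.sqrt x in Hs1 Hs2 *.
have Hx4096 : (4096 <= x)%coq_nat by rewrite /x; lia.
have Hi : (64 <= i)%coq_nat.
  case: (Nat.le_gt_cases 64 i) => // H.
  have : (S i * S i <= 64 * 64)%coq_nat by apply: Nat.mul_le_mono; lia.
  lia.
have Hmain := main_nat (x := x) (i := i) Hr.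
have Hmain' : (i <= 24 * count (fun n => ~~ odd (p_mex (m * t) t n)) (iota 1 x))%coq_nat.
  apply/leP; apply: Hmain; apply/leP => //.
set C := count _ _ in Hmain' *.
have HiR : (INR i <= 24 * INR C)%R.
  have := le_INR _ _ Hmain'. by rewrite mult_INR (INR_IZR_INZ 24).
have Hi64 : (64 <= INR i)%R by have := le_INR _ _ Hi; rewrite (INR_IZR_INZ 64).
have HxR : (X < INR x + 1)%R by rewrite Hxz; lra.
have Hx2 : (INR x + 1 <= (INR i + 1) * (INR i + 1))%R.
  have : (S x <= S i * S i)%coq_nat by lia.
  move/le_INR; rewrite mult_INR !S_INR. lra.
have HX3 : (X / 3 <= INR i * INR i)%R by nra.
have Hsq : (sqrt (X / 3) <= INR i)%R.
  rewrite -(sqrt_square (INR i)); last by lra.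
  apply: sqrt_le_1_alt; lra.
lra.
Qed.
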